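(* For all integers $r,n,\nu\ge 0$ and all real $x$, $$\frac{d^\nu}{dx^\nu}H_{r,n}(x)=r!\,n!\sum_{j=0}^{\nu}\alpha_{j,\nu}\,\frac{H_{r-\nu+j,\,n-j}(x)}{(r-\nu+j)!\,(n-j)!},$$ where any term with $r-\nu+j<0$ or $n-j<0$ is interpreted as $0$, and the numbers $\alpha_{j,\nu}$ ($0\le j\le\nu$) are defined by $\alpha_{0,\nu}=2^\nu$, $\alpha_{\nu,\nu}=1$, and $\alpha_{j,\nu}=2\alpha_{j,\nu-1}+\alpha_{j-1,\nu-1}$ for $1\le j<\nu$.
   Context: For integers $m,n\ge 0$, the two-index Hermite polynomial is $H_{m,n}(x)=\left(-\frac{d}{dx}+2x\right)^m(x^n)$, i.e. the operator $f\mapsto -f'+2xf$ applied $m$ times to $x^n$; by convention $H_{m,n}=0$ whenever $m<0$ or $n<0$. *)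

(* Defs.v *)
(* H_{m,n} is a polynomial; we work in {poly R} over an
   arbitrary real field R and use the formal derivative. *)
From HB Require Import structures.
From mathcomp Require Import all_boot all_order all_algebra.
Set Implicit Arguments. Unset Strict Implicit. Unset Printing Implicit Defensive.
Import Order.TTheory GRing.Theory Num.Theory.
Local Open Scope ring_scope.

Definition Hop (R : realFieldType) (p : {poly R}) : {poly R} :=
  - p^`() + 2%:P * 'X * p.

Definition Hpoly (R : realFieldType) (m n : nat) : {poly R} :=
  iter m (@Hop R) ('X^n).

Fixpoint alpha (j nu : nat) : nat :=
  match nu with
  | 0 => 1
  | nu'.+1 =>
      if j == 0 then 2 ^ nu
      else if j == nu then 1
      else 2 * alpha j nu' + alpha j.-1 nu'
  end%N.

(* Main.v *)
Require Import Defs.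
From HB Require Import structures.
From mathcomp Require Import all_boot all_order all_algebra.
From mathcomp Require Import zify ring lra.
Import Order.TTheory GRing.Theory Num.Theory.
Local Open Scope ring_scope.

Section S.
Variable R : realFieldType.

Lemma Hop_D (p q : {poly R}) : Hop (p + q) = Hop p + Hop q.
Proof. rewrite /Hop derivD; ring. Qed.

Lemma Hop_Z (c : R) (p : {poly R}) : Hop (c *: p) = c *: Hop p.
Proof. rewrite /Hop derivZ -!mul_polyC; ring. Qed.

Lemma Hop_deriv (p : {poly R}) : (Hop p)^`() = Hop (p^`()) + 2 *: p.
Proof.
rewrite /Hop derivD derivN !derivM derivX derivC -!mul_polyC mul0r add0r mulr1.
by rewrite [2%:P * p + _]addrC addrA.
Qed.

Lemma HpolyS m n : Hpoly R m.+1 n = Hop (Hpoly R m n).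
Proof. by rewrite /Hpoly iterS. Qed.

Lemma Hpoly_deriv m n :
  (Hpoly R m n)^`() = (2 * m)%:R *: Hpoly R m.-1 n + n%:R *: Hpoly R m n.-1.
Proof.
elim: m => [|m IH].
  by rewrite /Hpoly /= derivXn muln0 scale0r add0r scaler_nat.
rewrite HpolyS Hop_deriv IH Hop_D !Hop_Z -!HpolyS.
have -> : (2 * m)%:R *: Hop (Hpoly R m.-1 n) = (2 * m)%:R *: Hpoly R m n.
  by case: m {IH} => [|m]; rewrite ?muln0 ?scale0r // -HpolyS.
rewrite /= mulnS natrD -!mul_polyC !rmorphD /= !polyC1; ring.
Qed.

Lemma fact_neq0 k : (k`!)%:R != 0 :> R.
Proof. by rewrite pnatr_eq0 -lt0n fact_gt0. Qed.

Definition G m n : {poly R} := ((m`! * n`!)%:R)^-1 *: Hpoly R m n.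
Definition Gz (a b : int) : {poly R} :=
  match a, b with Posz m, Posz n => G m n | _, _ => 0 end.

Lemma G_deriv m n : (G m n)^`() =
  (if m is m'.+1 then 2 *: G m' n else 0) + (if n is n'.+1 then G m n' else 0).
Proof.
rewrite /G derivZ Hpoly_deriv scalerDr !scalerA.
have h1 := fact_neq0.
case: m => [|m]; case: n => [|n] /=; rewrite ?muln0 ?mul0n ?mulr0 ?scale0r ?add0r ?addr0 //;
  rewrite ?scalerA; try congr (_ + _); try congr (_ *: _);
  rewrite ?factS !natrM; field; by rewrite !h1 ?nat1r ?pnatr_eq0. Qed.

Lemma Gz_neg a b : ((a < 0) || (b < 0))%R -> Gz a b = 0.
Proof. by case: a => [m|k]; case: b => [n|l]. Qed.

Lemma Gz_deriv a b : (Gz a b)^`() = 2 *: Gz (a - 1) b + Gz a (b - 1).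
Proof.
have Z : forall c d, ((c < 0) || (d < 0))%R -> Gz c d = 0 by apply: Gz_neg.
case: a => [m|k]; last first.
  have -> : Gz (Negz k - 1) b = 0 by apply: Z; apply/orP; left; lia.
  have -> : Gz (Negz k) (b - 1) = 0 by apply: Z; apply/orP; left; lia.
  by rewrite /= deriv0 scaler0 addr0.
case: b => [n|l]; last first.
  have -> : Gz (Posz m - 1) (Negz l) = 0 by apply: Z; apply/orP; right; lia.
  have -> : Gz (Posz m) (Negz l - 1) = 0 by apply: Z; apply/orP; right; lia.
  by rewrite /= deriv0 scaler0 addr0.
rewrite /= G_deriv; congr (_ + _).
  case: m => [|m].
    have -> : Gz (Posz 0 - 1) n = 0 by apply: Z; apply/orP; left; lia.
    by rewrite scaler0.
  by have -> : (Posz m.+1 - 1 = Posz m)%R by lia.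
case: n => [|n].
  by have -> : (Posz 0 - 1 = Negz 0)%R by lia.
have -> : (Posz n.+1 - 1 = Posz n)%R by lia. reflexivity.
Qed.
End S.

Fixpoint beta (j nu : nat) : nat :=
  match nu with
  | 0 => (j == 0 : nat)
  | nu'.+1 => 2 * beta j nu' + (if j is j'.+1 then beta j' nu' else 0)
  end.

Lemma beta_gt j nu : (nu < j)%N -> beta j nu = 0%N.
Proof.
elim: nu j => [|nu IH] [|j] //= h.
by rewrite !IH //; lia.
Qed.

Lemma beta0 nu : beta 0 nu = (2 ^ nu)%N.
Proof. by elim: nu => //= nu ->; rewrite addn0 expnS. Qed.

Lemma beta_diag nu : beta nu nu = 1%N.
Proof. by elim: nu => //= nu ->; rewrite beta_gt. Qed.

Lemma alpha_beta j nu : (j <= nu)%N -> alpha j nu = beta j nu.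
Proof.
elim: nu j => [|nu IH] j h /=; first by case: j h.
case: j h => [|j] h /=; first by rewrite beta0 addn0 expnS.
have [->|hj2] := eqVneq j nu; first by rewrite eqxx beta_diag beta_gt.
rewrite eqSS (negbTE hj2) !IH //; lia.
Qed.

Section T.
Variable R : realFieldType.

Lemma Gz_derivn (r n : nat) nu :
  (Gz R r n)^`(nu) = \sum_(j < nu.+1)
     (beta j nu)%:R *: Gz R (r%:Z - nu%:Z + j%:Z) (n%:Z - j%:Z).
Proof.
elim: nu => [|nu IH].
  by rewrite big_ord1 /= scale1r !addn0.
rewrite (derivnS (Gz R r n) nu) IH raddf_sum /=.
under eq_bigr do rewrite derivZ Gz_deriv scalerDr !scalerA.
rewrite big_split /=.
under [RHS]eq_bigr do rewrite /= natrD scalerDl.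
rewrite big_split /=; congr (_ + _).
  rewrite [RHS]big_ord_recr /= beta_gt // muln0 scale0r addr0.
  apply: eq_bigr => j _; rewrite natrM; congr (_ *: _); first by rewrite mulrC.
  congr (Gz R _ _); lia.
rewrite [RHS]big_ord_recl /= scale0r add0r.
apply: eq_bigr => j _; rewrite /bump /=; congr (_ *: Gz R _ _); lia.
Qed.
End T.

(* The j-th summand is 0 unless r - nu + j >= 0 and n - j >= 0,
   i.e. unless nu - j <= r and j <= n (with j <= nu). *)
Theorem mainTheorem15 (R : realFieldType) (r n nu : nat) (x : R) :
  ((Hpoly R r n)^`(nu)).[x] =
  (r`!)%:R * (n`!)%:R *
  \sum_(j < nu.+1)
     (if ((nu - j <= r)%N && (j <= n)%N) then
        (alpha j nu)%:R * (Hpoly R (r - (nu - j)) (n - j)).[x]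
          / ((r - (nu - j))`!)%:R / ((n - j)`!)%:R
      else 0).
Proof.
have E : Hpoly R r n = ((r`! * n`!)%:R) *: Gz R r n.
  by rewrite /= /G scalerA mulfV ?scale1r // natrM mulf_neq0 ?fact_neq0.
rewrite E derivnZ Gz_derivn hornerZ natrM horner_sum; congr (_ * _).
apply: eq_bigr => j _; rewrite hornerZ.
have hj := ltn_ord j.
case: (leqP (nu - j) r) => h1; case: (leqP j n) => h2 /=.
- have -> : (r%:Z - nu%:Z + j%:Z = Posz (r - (nu - j)))%R by lia.
  have -> : (n%:Z - j%:Z = Posz (n - j))%R by lia.
  rewrite /= /G hornerZ alpha_beta; last by lia.
  rewrite natrM invfM; field; by rewrite !fact_neq0.
- have -> : Gz R (r%:Z - nu%:Z + j%:Z) (n%:Z - j%:Z) = 0.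
    by apply: Gz_neg; apply/orP; right; lia.
  by rewrite horner0 mulr0.
- have -> : Gz R (r%:Z - nu%:Z + j%:Z) (n%:Z - j%:Z) = 0.
    by apply: Gz_neg; apply/orP; left; lia.
  by rewrite horner0 mulr0.
- have -> : Gz R (r%:Z - nu%:Z + j%:Z) (n%:Z - j%:Z) = 0.
    by apply: Gz_neg; apply/orP; left; lia.
  by rewrite horner0 mulr0.
Qed.
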